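(* Let $\varepsilon>0$, let $u,v\in C(\bar\Omega)$ and $f,\tilde f:\Omega_\varepsilon\to\mathbb{R}$ satisfy, at every point of $\Omega_\varepsilon$, $$a^-_\varepsilon(\beta)S^-_\varepsilon u-a^+_\varepsilon(\beta)S^+_\varepsilon u\le f\le\tilde f\le a^-_\varepsilon(\beta)S^-_\varepsilon v-a^+_\varepsilon(\beta)S^+_\varepsilon v.$$ Suppose in addition that (i) $f<\tilde f$ on $\Omega_\varepsilon$, or (ii) $f\le0$ on $\Omega_\varepsilon$, or (iii) $\tilde f\ge0$ on $\Omega_\varepsilon$. Then $$\max_{\bar\Omega}(u-v)=\max_{\bar\Omega\setminus\Omega_\varepsilon}(u-v).$$
   Context: Setting: $\Omega\subseteq\mathbb{R}^n$ is a bounded open connected set with $C^1$ boundary, $\Gamma_D\subseteq\partial\Omega$ is a nonempty closed subset (the Dirichlet part of the boundary), $\beta\in\mathbb{R}$. Notation: $\Omega_\varepsilon:=\{x\in\bar\Omega:\operatorname{dist}(x,\Gamma_D)>\varepsilon\}$; for a function $w$ and $x\in\Omega_\varepsilon$, $w^\varepsilon(x):=\max_{\bar B(x,\varepsilon)\cap\bar\Omega}w$, $w_\varepsilon(x):=\min_{\bar B(x,\varepsilon)\cap\bar\Omega}w$, $S^+_\varepsilon w(x):=\frac1\varepsilon(w^\varepsilon(x)-w(x))$, $S^-_\varepsilon w(x):=\frac1\varepsilon(w(x)-w_\varepsilon(x))$. Coefficients: for $\beta\ne0$, $a^+_\varepsilon(\beta):=\frac{\beta}{e^{\varepsilon\beta}-1}$,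 $a^-_\varepsilon(\beta):=\frac{\beta}{1-e^{-\varepsilon\beta}}$; $a^\pm_\varepsilon(0):=1/\varepsilon$. *)

(* Defs.v *)
From HB Require Import structures.
From mathcomp Require Import all_boot all_order all_algebra.
From mathcomp Require Import all_classical all_reals all_analysis.
Set Implicit Arguments. Unset Strict Implicit. Unset Printing Implicit Defensive.
Import Order.TTheory GRing.Theory Num.Theory.
Import numFieldNormedType.Exports.
Local Open Scope classical_set_scope.
Local Open Scope ring_scope.

Section Defs.
Variable R : realType.
Variable n : nat.
Notation pt := 'rV[R]_n.+1.

(* Euclidean norm (the library norm on 'rV is the sup norm) *)
Definition enorm (x : pt) : R := Num.sqrt (\sum_(i < n.+1) (x 0 i) ^+ 2).

Definition dist_set (A : set pt) (x : pt) : R := inf [set enorm (x - y) | y in A].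

Definition bdry (Om : set pt) : set pt := closure Om `\` interior Om.

Definition C1fun (g : 'rV[R]_n -> R) : Prop :=
  (forall z, differentiable g z) /\ (forall v, continuous (fun z => 'D_v g z)).

(* Omega has C^1 boundary: near every boundary point, after a rigid motion,
   Omega is the subgraph of a C^1 function of the first n coordinates. *)
Definition C1_boundary (Om : set pt) : Prop :=
  forall x, bdry Om x ->
    exists (r : R) (Q : 'M[R]_n.+1) (g : 'rV[R]_n -> R),
      [/\ 0 < r, Q^T *m Q = 1%:M, C1fun g &
        forall y, enorm (y - x) < r ->
          (Om y <-> let z := (y - x) *m Q in
                    z 0 ord_max < g (\row_(i < n) z 0 (lift ord_max i)))].

Definition Om_eps (Om GD : set pt) (eps : R) : set pt :=
  [set x | closure Om x /\ eps < dist_set GD x].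

Definition cball_cl (Om : set pt) (x : pt) (eps : R) : set pt :=
  [set y | closure Om y /\ enorm (y - x) <= eps].

(* max / min of w over closed ball cap closure (compact, so sup/inf are attained) *)
Definition wsup (Om : set pt) (eps : R) (w : pt -> R) (x : pt) : R :=
  sup [set w y | y in cball_cl Om x eps].
Definition winf (Om : set pt) (eps : R) (w : pt -> R) (x : pt) : R :=
  inf [set w y | y in cball_cl Om x eps].

Definition Splus (Om : set pt) (eps : R) (w : pt -> R) (x : pt) : R :=
  (wsup Om eps w x - w x) / eps.
Definition Sminus (Om : set pt) (eps : R) (w : pt -> R) (x : pt) : R :=
  (w x - winf Om eps w x) / eps.
End Defs.

Definition a_plus (R : realType) (eps beta : R) : R :=
  if beta == 0 then eps^-1 else beta / (expR (eps * beta) - 1).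
Definition a_minus (R : realType) (eps beta : R) : R :=
  if beta == 0 then eps^-1 else beta / (1 - expR (- (eps * beta))).

Definition Lop (R : realType) (n : nat) (Om : set 'rV[R]_n.+1) (eps beta : R)
  (w : 'rV[R]_n.+1 -> R) (x : 'rV[R]_n.+1) : R :=
  a_minus eps beta * Sminus Om eps w x - a_plus eps beta * Splus Om eps w x.

(* Main.v *)
Require Import Defs.
From HB Require Import structures.
From mathcomp Require Import all_boot all_order all_algebra.
From mathcomp Require Import all_classical all_reals all_analysis.
From mathcomp Require Import ring lra.
Import Order.TTheory GRing.Theory Num.Theory.
Import numFieldNormedType.Exports.
Local Open Scope classical_set_scope.
Local Open Scope ring_scope.
Set Implicit Arguments.
Unset Strict Implicit.

Section Helpers.
Variable R : realType.
Variable n : nat.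
Local Notation pt := 'rV[R]_n.+1.

Lemma closed_within_eq (K : set pt) (g : pt -> R) (c : R) :
  closed K -> {within K, continuous g} -> closed [set x | K x /\ g x = c].
Proof.
move=> cK cg.
have := (continuous_closedP (from_subspace K g)).1 cg _ (@closed_eq R c).
move/closed_subspaceP => [V cV VE].
have -> : [set x | K x /\ g x = c] = V `&` K.
  rewrite VE; apply/seteqP; split => x /=; first by move=> [] ? ?; split.
  by move=> [] ? ?; split.
exact: closedI.
Qed.

Lemma within_contB (K : set pt) (g h : pt -> R) :
  {within K, continuous g} -> {within K, continuous h} ->
  {within K, continuous (fun x => g x - h x)}.
Proof. by move=> cg ch x; apply: cvgB; [exact: cg|exact: ch]. Qed.

Lemma enorm_ge0 (z : pt) : 0 <= enorm z.
Proof. exact: sqrtr_ge0. Qed.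

Lemma enorm0 (x : pt) : enorm (x - x) = 0.
Proof.
rewrite /enorm subrr big1 ?sqrtr0 // => i _.
by rewrite mxE expr0n.
Qed.

Lemma enorm_leP (z : pt) (e : R) : 0 <= e ->
  (enorm z <= e) <-> (\sum_(i < n.+1) (z 0 i) ^+ 2 <= e ^+ 2).
Proof.
move=> e0; rewrite /enorm -[X in _ <= X](@ger0_norm _ e) // -sqrtr_sqr ler_sqrt //.
exact: sqr_ge0.
Qed.

Lemma coord_le_norm (z : pt) (i : 'I_n.+1) : `|z 0 i| <= `|z|.
Proof.
rewrite [leRHS]/Num.Def.normr /= mx_normrE; apply/bigmax_geP; right => /=.
by exists (0, i).
Qed.

Lemma closed_enorm_le (x : pt) (e : R) : 0 <= e ->
  closed [set y : pt | enorm (y - x) <= e].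
Proof.
move=> e0.
have -> : [set y : pt | enorm (y - x) <= e] =
  (fun y : pt => \sum_(i < n.+1) ((y - x) 0 i) ^+ 2) @^-1` [set r | r <= e ^+ 2].
  by apply/seteqP; split => y /=; rewrite enorm_leP.
apply: (continuous_closedP _).1; last exact: closed_le.
apply: (@continuous_big _ _ +%R 0 xpredT); first exact: add_continuous.
have hc (i : 'I_n.+1) : continuous (fun y : pt => (y - x) 0 i).
  move=> y.
  have h1 : (fun z : pt => z - x) @ y --> y - x.
    exact: (cvgB cvg_id (cvg_cst x)).
  exact: (cvg_comp _ _ h1 (@coord_continuous R 1 n.+1 0 i (y - x))).
move=> i _.
have -> : (fun y : pt => ((y - x) 0 i) ^+ 2) = (fun y => (y - x) 0 i * (y - x) 0 i).
  by apply/funext => z; rewrite expr2.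
by move=> y; exact: (cvgM (hc i y) (hc i y)).
Qed.


Lemma ball_enorm (x y : pt) (e : R) : 0 < e ->
  ball x (e / n.+1%:R) y -> enorm (y - x) <= e.
Proof.
move=> e0 bxy; rewrite enorm_leP; last exact: ltW.
set r := e / n.+1%:R.
have N1 : 1 <= n.+1%:R :> R by rewrite ler1n.
have r0 : 0 < r by rewrite divr_gt0 // ltr0n.
have er : e = n.+1%:R * r by rewrite /r mulrC divfK // pnatr_eq0.
have hn : `|x - y| < r by move: bxy; rewrite -ball_normE.
apply: (@le_trans _ _ (\sum_(i < n.+1) r ^+ 2)).
  apply: ler_sum => i _.
  rewrite -real_normK ?num_real //; apply: lerXn2r; rewrite ?nnegrE ?normr_ge0 ?ltW //.
  by apply: (le_lt_trans (coord_le_norm _ i)); rewrite distrC.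
rewrite sumr_const card_ord -mulr_natr er.
have : 0 <= r ^+ 2 by exact: sqr_ge0.
nra.
Qed.

Lemma sup_attained (S : set R) (a : R) : S a -> (forall b, S b -> b <= a) -> sup S = a.
Proof.
move=> Sa ub; apply/le_anti/andP; split.
  by apply: ge_sup; [exists a | exact: ub].
by apply: ub_le_sup => //; exists a.
Qed.

Lemma inf_attained (S : set R) (a : R) : S a -> (forall b, S b -> a <= b) -> inf S = a.
Proof.
move=> Sa lb; apply/le_anti/andP; split.
  by apply: ge_inf => //; exists a.
by apply: lb_le_inf; [exists a | exact: lb].
Qed.

Lemma bounded_closure (Om : set pt) : bounded_set Om -> bounded_set (closure Om).
Proof.
move=> [M [Mreal HM]]; exists (M + 1); split; first by rewrite realD ?real1.
move=> r Mr; have /HM Hs : M < M + 1 by rewrite ltrDl.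
have sub : closure Om `<=` [set y : pt | `|y| <= M + 1].
  rewrite closureE; apply: smallest_sub; last exact: Hs.
  have := (continuous_closedP _).1 (@norm_continuous R pt) [set r | r <= M + 1] (@closed_le R (M + 1)).
  exact.
move=> y /sub /= hy; apply: (le_trans hy); exact: ltW.
Qed.


Lemma conn_arg (Om GD : set pt) (eps : R) (B : set pt) :
  connected Om -> GD `<=` closure Om -> GD !=set0 -> 0 < eps ->
  closed B -> B !=set0 -> B `<=` closure Om ->
  (forall x, B x -> Om_eps Om GD eps x ->
     forall y, closure Om y -> enorm (y - x) <= eps -> B y) ->
  exists x, B x /\ ~ Om_eps Om GD eps x.
Proof.
move=> cOm GDcl [g GDg] e0 cB B0 BK loc.
apply: contrapT => hno.
have allin : forall x, B x -> Om_eps Om GD eps x.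
  move=> x Bx; apply: contrapT => nx; apply: hno; by exists x.
have BeqK : B = closure Om.
  apply: (connected_closure cOm) => //.
  - exists (\bigcup_(x in B) ball x (eps / n.+1%:R)).
      apply: bigcup_open => i _; exact: ball_open.
    apply/seteqP; split => y.
      move=> By; split; first exact: BK.
      exists y => //; apply: ballxx; rewrite divr_gt0 // ltr0n.
    move=> [Ky [x Bx bxy]]; apply: (loc x Bx (allin x Bx) y Ky).
    exact: ball_enorm.
  - exists B => //; apply/seteqP; split => y; first by move=> By; split => //; exact: BK.
    by case.
have : Om_eps Om GD eps g by apply: allin; rewrite BeqK; exact: GDcl.
move=> [_ hd].
have hle : dist_set GD g <= 0.
  rewrite /dist_set -(enorm0 g); apply: ge_inf.
  - exists 0 => _ [z _ <-]; exact: enorm_ge0.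
  - by exists g.
by have := lt_le_trans hd hle; move/(lt_trans e0); rewrite ltxx.
Qed.

End Helpers.

Lemma a_plus_gt0 (R : realType) (e b : R) : 0 < e -> 0 < a_plus e b.
Proof.
move=> e0; rewrite /a_plus; case: eqP => [_|/eqP b0]; first by rewrite invr_gt0.
case: (ltgtP b 0) => hb; last by move: b0; rewrite hb eqxx.
- have h : expR (e * b) < 1 by rewrite expR_lt1 pmulr_rlt0.
  by rewrite nmulr_rgt0 // invr_lt0 subr_lt0.
- have h : 1 < expR (e * b) by rewrite expR_gt1 pmulr_rgt0.
  by rewrite divr_gt0 // subr_gt0.
Qed.

Lemma a_minus_gt0 (R : realType) (e b : R) : 0 < e -> 0 < a_minus e b.
Proof.
move=> e0; rewrite /a_minus; case: eqP => [_|/eqP b0]; first by rewrite invr_gt0.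
case: (ltgtP b 0) => hb; last by move: b0; rewrite hb eqxx.
- have h : 1 < expR (- (e * b)) by rewrite expR_gt1 oppr_gt0 pmulr_rlt0.
  by rewrite nmulr_rgt0 // invr_lt0 subr_lt0.
- have h : expR (- (e * b)) < 1 by rewrite expR_lt1 oppr_lt0 pmulr_rgt0.
  by rewrite divr_gt0 // subr_gt0.
Qed.


Section Main.
Local Unset Implicit Arguments.
Variables (R : realType) (n : nat).
Local Notation pt := 'rV[R]_n.+1.
Variables (Om GD : set pt) (beta eps : R) (u v f ft : pt -> R).
Hypothesis e0 : 0 < eps.
Hypothesis bOm : bounded_set Om.
Hypotheses (cu : {within closure Om, continuous u}) (cv : {within closure Om, continuous v}).
Hypothesis Hch : forall x, Om_eps Om GD eps x ->
  Lop Om eps beta u x <= f x /\ f x <= ft x /\ ft x <= Lop Om eps beta v x.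
Variables (lu Uu lv Uv M : R).
Hypothesis hu : forall y, closure Om y -> lu <= u y /\ u y <= Uu.
Hypothesis hv : forall y, closure Om y -> lv <= v y /\ v y <= Uv.
Hypothesis wM : forall y, closure Om y -> u y - v y <= M.

Lemma sup_ge_gen (g : pt -> R) (lg Ug : R) :
  (forall y, closure Om y -> lg <= g y /\ g y <= Ug) ->
  forall x y, cball_cl Om x eps y -> g y <= wsup Om eps g x.
Proof.
move=> hg x y By.
have hb : has_ubound [set g z | z in cball_cl Om x eps].
  by exists Ug => _ [z [Kz _] <-]; exact: (hg z Kz).2.
by apply: (ub_le_sup hb); exists y.
Qed.

Lemma inf_le_gen (g : pt -> R) (lg Ug : R) :
  (forall y, closure Om y -> lg <= g y /\ g y <= Ug) ->
  forall x y, cball_cl Om x eps y -> winf Om eps g x <= g y.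
Proof.
move=> hg x y By.
have hb : has_lbound [set g z | z in cball_cl Om x eps].
  by exists lg => _ [z [Kz _] <-]; exact: (hg z Kz).1.
by apply: (ge_inf hb); exists y.
Qed.

Lemma ball_self x : closure Om x -> cball_cl Om x eps x.
Proof. by move=> Kx; split => //; rewrite enorm0 ltW. Qed.

Lemma Lop_mul (g : pt -> R) x :
  eps * Lop Om eps beta g x =
  a_minus eps beta * (g x - winf Om eps g x) - a_plus eps beta * (wsup Om eps g x - g x).
Proof.
rewrite /Lop /Sminus /Splus; field; exact: lt0r_neq0.
Qed.

Lemma cK : compact (closure Om).
Proof. exact: bounded_closed_compact (bounded_closure bOm) (@closed_closure _ _). Qed.

Lemma ball_compact x : compact (cball_cl Om x eps).
Proof.
apply: (subclosed_compact _ cK); last by move=> y [].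
rewrite (_ : cball_cl Om x eps = closure Om `&` [set y | enorm (y - x) <= eps]) //.
by apply: closedI; [exact: closed_closure | exact: closed_enorm_le (ltW e0)].
Qed.

Lemma ball_max (g : pt -> R) (lg Ug : R) :
  {within closure Om, continuous g} ->
  (forall y, closure Om y -> lg <= g y /\ g y <= Ug) ->
  forall x, closure Om x -> exists c, cball_cl Om x eps c /\ wsup Om eps g x = g c.
Proof.
move=> cg hg x Kx.
have [c cB cmax] := EVT_max_rV (ex_intro _ x (ball_self x Kx)) (ball_compact x)
  (continuous_subspaceW (fun y (h : cball_cl Om x eps y) => h.1) cg).
rewrite inE in cB; exists c; split => //.
apply: sup_attained; first by exists c.
by move=> _ [y By <-]; apply: cmax; rewrite inE.
Qed.

Lemma ball_min (g : pt -> R) (lg Ug : R) :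
  {within closure Om, continuous g} ->
  (forall y, closure Om y -> lg <= g y /\ g y <= Ug) ->
  forall x, closure Om x -> exists c, cball_cl Om x eps c /\ winf Om eps g x = g c.
Proof.
move=> cg hg x Kx.
have [c cB cmin] := EVT_min_rV (ex_intro _ x (ball_self x Kx)) (ball_compact x)
  (continuous_subspaceW (fun y (h : cball_cl Om x eps y) => h.1) cg).
rewrite inE in cB; exists c; split => //.
apply: inf_attained; first by exists c.
by move=> _ [y By <-]; apply: cmin; rewrite inE.
Qed.

Lemma core x : Om_eps Om GD eps x -> u x - v x = M ->
  [/\ winf Om eps u x = winf Om eps v x + M,
      wsup Om eps u x = wsup Om eps v x + M & f x = ft x].
Proof.
move=> Ox wx; have Kx := Ox.1.
have Bx := ball_self x Kx.
set iu := winf Om eps u x; set iv := winf Om eps v x.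
set su := wsup Om eps u x; set sv := wsup Om eps v x.
have a : su <= sv + M.
  apply: ge_sup; first by exists (u x), x.
  move=> _ [y By <-]; have := wM y By.1; have := sup_ge_gen v lv Uv hv x y By; rewrite -/sv; lra.
have b : iu - M <= iv.
  apply: lb_le_inf; first by exists (v x), x.
  move=> _ [y By <-]; have := wM y By.1; have := inf_le_gen u lu Uu hu x y By; rewrite -/iu; lra.
have c1 : iu <= u x := inf_le_gen u lu Uu hu x x Bx.
have c2 : u x <= su := sup_ge_gen u lu Uu hu x x Bx.
have c3 : iv <= v x := inf_le_gen v lv Uv hv x x Bx.
have c4 : v x <= sv := sup_ge_gen v lv Uv hv x x Bx.
have [h1 [h2 h3]] := Hch x Ox.
have Lu := Lop_mul u x; have Lv := Lop_mul v x.
rewrite -/iu -/su in Lu; rewrite -/iv -/sv in Lv.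
have am := a_minus_gt0 beta e0; have ap := a_plus_gt0 beta e0.
set Am := a_minus eps beta in Lu Lv am; set Ap := a_plus eps beta in Lu Lv ap.
have E1 : eps * Lop Om eps beta u x <= eps * Lop Om eps beta v x.
  by rewrite ler_pM2l //; lra.
have P1 : 0 <= Am * (M - (iu - iv)) by apply: mulr_ge0; lra.
have P2 : 0 <= Ap * (M - (su - sv)) by apply: mulr_ge0; lra.
have Z : Am * (M - (iu - iv)) + Ap * (M - (su - sv)) <= 0.
  rewrite Lu Lv in E1; move: E1; rewrite -wx; lra.
have Z1 : Am * (M - (iu - iv)) = 0 by lra.
have Z2 : Ap * (M - (su - sv)) = 0 by lra.
have X1 : M - (iu - iv) = 0.
  by apply: (mulfI (lt0r_neq0 am)); rewrite mulr0.
have X2 : M - (su - sv) = 0.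
  by apply: (mulfI (lt0r_neq0 ap)); rewrite mulr0.
split; [lra|lra|].
have E2 : eps * f x <= eps * ft x by rewrite ler_pM2l.
have E3 : eps * ft x <= eps * Lop Om eps beta v x by rewrite ler_pM2l.
have E4 : eps * Lop Om eps beta u x <= eps * f x by rewrite ler_pM2l.
have Eq : eps * Lop Om eps beta u x = eps * Lop Om eps beta v x.
  rewrite Lu Lv; have -> : iu = iv + M by lra.
  have -> : su = sv + M by lra.
  rewrite -wx; ring.
apply: (mulfI (lt0r_neq0 e0)); nra.
Qed.


Lemma case2 x : Om_eps Om GD eps x -> u x - v x = M -> f x <= 0 ->
  wsup Om eps u x <= u x ->
  forall y, cball_cl Om x eps y -> u y = u x /\ v y = v x.
Proof.
move=> Ox wx fx0 sux; have Kx := Ox.1; have Bx := ball_self x Kx.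
have [E1 E2 _] := core x Ox wx.
have c1 := inf_le_gen u lu Uu hu x x Bx.
have c3 := inf_le_gen v lv Uv hv x x Bx.
have c4 := sup_ge_gen v lv Uv hv x x Bx.
have c2 := sup_ge_gen u lu Uu hu x x Bx.
have [h1 _] := Hch x Ox.
have Lu := Lop_mul u x.
have am := a_minus_gt0 beta e0; have ap := a_plus_gt0 beta e0.
set Am := a_minus eps beta in Lu am; set Ap := a_plus eps beta in Lu ap.
have su : wsup Om eps u x = u x by lra.
rewrite su subrr mulr0 subr0 in Lu.
have : eps * Lop Om eps beta u x <= 0.
  by rewrite pmulr_rle0 //; lra.
rewrite Lu pmulr_rle0 // => hiu.
move=> y By.
have := inf_le_gen u lu Uu hu x y By; have := sup_ge_gen u lu Uu hu x y By.
have := inf_le_gen v lv Uv hv x y By; have := sup_ge_gen v lv Uv hv x y By.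
lra.
Qed.

Lemma case3 x : Om_eps Om GD eps x -> u x - v x = M -> 0 <= ft x ->
  v x <= winf Om eps v x ->
  forall y, cball_cl Om x eps y -> u y = u x /\ v y = v x.
Proof.
move=> Ox wx fx0 ivx; have Kx := Ox.1; have Bx := ball_self x Kx.
have [E1 E2 _] := core x Ox wx.
have c1 := inf_le_gen u lu Uu hu x x Bx.
have c3 := inf_le_gen v lv Uv hv x x Bx.
have c4 := sup_ge_gen v lv Uv hv x x Bx.
have c2 := sup_ge_gen u lu Uu hu x x Bx.
have [_ [_ h3]] := Hch x Ox.
have Lv := Lop_mul v x.
have am := a_minus_gt0 beta e0; have ap := a_plus_gt0 beta e0.
set Am := a_minus eps beta in Lv am; set Ap := a_plus eps beta in Lv ap.
have iv : winf Om eps v x = v x by lra.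
rewrite iv subrr mulr0 sub0r in Lv.
have : 0 <= eps * Lop Om eps beta v x.
  by rewrite pmulr_rge0 //; lra.
rewrite Lv oppr_ge0 pmulr_rle0 // => hsv.
move=> y By.
have := inf_le_gen u lu Uu hu x y By; have := sup_ge_gen u lu Uu hu x y By.
have := inf_le_gen v lv Uv hv x y By; have := sup_ge_gen v lv Uv hv x y By.
lra.
Qed.

Lemma main_exists :
  connected Om -> GD `<=` closure Om -> GD !=set0 ->
  [set x | closure Om x /\ u x - v x = M] !=set0 ->
  ((forall x, Om_eps Om GD eps x -> f x < ft x) \/
   (forall x, Om_eps Om GD eps x -> f x <= 0) \/
   (forall x, Om_eps Om GD eps x -> 0 <= ft x)) ->
  exists x, (closure Om x /\ u x - v x = M) /\ ~ Om_eps Om GD eps x.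
Proof.
set A := [set x | closure Om x /\ u x - v x = M].
move=> cOm GDK GD0 [xM AxM] cases.
have cA : closed A.
  exact: closed_within_eq (@closed_closure _ _) (within_contB cu cv).
have kA : compact A by apply: (subclosed_compact cA cK) => y [].
have AK : A `<=` closure Om by move=> y [].
case: cases => [c1|[c2|c3]].
- exists xM; split => // Ox.
  have [_ _ E] := core xM Ox AxM.2; have := c1 xM Ox; lra.
- have [x1 x1A x1max] := EVT_max_rV (ex_intro _ xM AxM) kA (continuous_subspaceW AK cu).
  rewrite inE in x1A.
  set B := [set y | A y /\ u y = u x1].
  have cB : closed B by exact: closed_within_eq cA (continuous_subspaceW AK cu).
  have [x [[Ax _] nOx]] : exists x, B x /\ ~ Om_eps Om GD eps x.
    apply: (conn_arg cOm GDK GD0 e0 cB); first by exists x1.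
      by move=> y [[]].
    move=> x [Ax ux] Ox y Ky hy.
    have [c [Bc sc]] := ball_max u lu Uu cu hu x Ax.1.
    have [_ E2 _] := core x Ox Ax.2.
    have vc := sup_ge_gen v lv Uv hv x c Bc.
    have Ac : A c by split; [exact: Bc.1 | have := wM c Bc.1; lra].
    have := x1max c; rewrite inE => /(_ Ac) hc.
    have [uy vy] := case2 x Ox Ax.2 (c2 x Ox) ltac:(lra) y (conj Ky hy).
    split; [split => //; have := Ax.2; lra | lra].
  by exists x.
- have [x1 x1A x1min] := EVT_min_rV (ex_intro _ xM AxM) kA (continuous_subspaceW AK cv).
  rewrite inE in x1A.
  set B := [set y | A y /\ v y = v x1].
  have cB : closed B by exact: closed_within_eq cA (continuous_subspaceW AK cv).
  have [x [[Ax _] nOx]] : exists x, B x /\ ~ Om_eps Om GD eps x.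
    apply: (conn_arg cOm GDK GD0 e0 cB); first by exists x1.
      by move=> y [[]].
    move=> x [Ax vx] Ox y Ky hy.
    have [c [Bc ic]] := ball_min v lv Uv cv hv x Ax.1.
    have [E1 _ _] := core x Ox Ax.2.
    have uc := inf_le_gen u lu Uu hu x c Bc.
    have Ac : A c by split; [exact: Bc.1 | have := wM c Bc.1; lra].
    have := x1min c; rewrite inE => /(_ Ac) hc.
    have [uy vy] := case3 x Ox Ax.2 (c3 x Ox) ltac:(lra) y (conj Ky hy).
    split; [split => //; have := Ax.2; lra | lra].
  by exists x.
Qed.

End Main.

Unset Implicit Arguments.
Set Strict Implicit.

Theorem lemma4p2 (R : realType) (n : nat) (Om GD : set 'rV[R]_n.+1) (beta eps : R)
  (u v f ft : 'rV[R]_n.+1 -> R) :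
  open Om -> bounded_set Om -> connected Om -> C1_boundary Om ->
  closed GD -> GD `<=` bdry Om -> GD !=set0 ->
  0 < eps ->
  {within closure Om, continuous u} -> {within closure Om, continuous v} ->
  (forall x, Om_eps Om GD eps x ->
     Lop Om eps beta u x <= f x /\ f x <= ft x /\ ft x <= Lop Om eps beta v x) ->
  ((forall x, Om_eps Om GD eps x -> f x < ft x) \/
   (forall x, Om_eps Om GD eps x -> f x <= 0) \/
   (forall x, Om_eps Om GD eps x -> 0 <= ft x)) ->
  sup [set (u x - v x) | x in closure Om] =
  sup [set (u x - v x) | x in closure Om `\` Om_eps Om GD eps].
Proof.
move=> oOm bOm cOm _ cGD GDb GD0 e0 cu cv Hch cases.
have GDK : GD `<=` closure Om by move=> y /GDb [].
have kK : compact (closure Om).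
  exact: bounded_closed_compact (bounded_closure bOm) (@closed_closure _ _).
have K0 : closure Om !=set0 by case: GD0 => g /GDK Kg; exists g.
have [xu _ xumax] := EVT_max_rV K0 kK cu.
have [yu _ yumin] := EVT_min_rV K0 kK cu.
have [xv _ xvmax] := EVT_max_rV K0 kK cv.
have [yv _ yvmin] := EVT_min_rV K0 kK cv.
have hu : forall y, closure Om y -> u yu <= u y /\ u y <= u xu.
  by move=> y Ky; split; [apply: yumin|apply: xumax]; rewrite inE.
have hv : forall y, closure Om y -> v yv <= v y /\ v y <= v xv.
  by move=> y Ky; split; [apply: yvmin|apply: xvmax]; rewrite inE.
have [xM xMK xMmax] := EVT_max_rV K0 kK (within_contB cu cv).
rewrite inE in xMK.
set M := u xM - v xM.
have wM : forall y, closure Om y -> u y - v y <= M.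
  by move=> y Ky; apply: xMmax; rewrite inE.
have [x [[Kx wx] nOx]] := main_exists R n Om GD beta eps u v f ft e0 bOm cu cv Hch
  (u yu) (u xu) (v yv) (v xv) M hu hv wM cOm GDK GD0 (ex_intro _ xM (conj xMK erefl)) cases.
rewrite (@sup_attained R _ M); first last.
- by move=> _ [y Ky <-]; exact: wM.
- by exists xM.
rewrite (@sup_attained R _ M) //.
- by exists x.
- by move=> _ [y [Ky _] <-]; exact: wM.
Qed.
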